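(* For an even $i$, 2Merge requires \[ \lceil\lg(i-1)\rceil + 1 - \frac{2}{p_i} + \frac{1}{3p_i^2} + O(1/i) \] comparisons on average at Step~4.
   Context: $\lg=\log_2$, $p_x = x/2^{\lceil \lg x\rceil}$. RHBS$(A,T)$, $T=(t_1,\dots,t_m)$ sorted: if $m\le 3\cdot 2^{\lceil\lg(m+1)\rceil-2}-1$ let $d=2^{\lceil\lg(m+1)\rceil-2}$, else $d=m-2^{\lceil\lg(m+1)\rceil-1}+1$; compare $A$ with $t_d$ and recurse on the left or right part. 2Merge$(A,B,T)$ with $T=(t_1,\dots,t_{i-2})$ sorted, $i$ even, $i\ge4$: Step 1 compare and swap so $A<B$; Steps 2–3 locate and insert $A$ (comparing $A$ with $t_{\lceil(1-2^{-r/2})i\rceil}$ for $r=1,2,\dots$ and then RHBS in the identified interval); suppose $A$ falls between $t_{\ell}$ and $t_{\ell+1}$. Step 4: insert $B$ into $(t_{\ell+1},\dots,t_{i-2})$ by RHBS. The two inserted elements occupy uniformly random distinct positions among the $i$ positions; given $A<B$, $\mathbf{Pr}[t_{\ell-1}<A<t_\ell]=(i-\ell)/\binom{i}{2}$, and $B$ is uniformly distributed over the positions to the right of $A$. *)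

(* Defs.v *)
From mathcomp Require Import all_boot all_order all_algebra.
Set Implicit Arguments. Unset Strict Implicit. Unset Printing Implicit Defensive.
Import Order.TTheory GRing.Theory Num.Theory.

(* ceil(lg n) for n >= 1 : [up_log 2 n] = least e with n <= 2^e. *)
Definition clg (n : nat) : nat := up_log 2 n.

(* RHBS pivot index d for a sorted list of length m >= 1.
   For m = 1 the paper's formula involves 2^(-1); with truncated nat
   exponent the test still yields d = 1, which matches the real formula. *)
Definition rhbs_d (m : nat) : nat :=
  if m <= 3 * 2 ^ (clg m.+1 - 2) - 1 then 2 ^ (clg m.+1 - 2)
  else m - 2 ^ (clg m.+1 - 1) + 1.

(* Number of comparisons made by RHBS inserting an element into a sorted
   list (t_1..t_m) when exactly j of the t's are smaller than it
   (0 <= j <= m).  [fuel] is a structural bound (fuel >= m suffices). *)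
Fixpoint rhbs_cost (fuel m j : nat) : nat :=
  match fuel with
  | 0 => 0
  | fuel'.+1 =>
    if m is 0 then 0 else
    let d := rhbs_d m in
    if j < d then (rhbs_cost fuel' (d - 1) j).+1
    else (rhbs_cost fuel' (m - d) (j - d)).+1
  end.

Definition rhbs_comps (m j : nat) : nat := rhbs_cost m m j.

(* Average number of comparisons at Step 4 of 2Merge for i positions:
   A, B occupy 0-based positions a < b among the i positions, uniformly
   over the binom(i,2) pairs.  Then l = a t's precede A, B is inserted into
   (t_{l+1},...,t_{i-2}) of length i-2-a, with b-1-a of those below B. *)
Definition step4_avg (R : realFieldType) (i : nat) : R :=
  ((\sum_(a < i) \sum_(b < i | (a < b)%N) (rhbs_comps (i - 2 - a) (b - 1 - a))%:R)
    / ('C(i, 2))%:R)%R.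

Definition pfrac (R : realFieldType) (x : nat) : R :=
  (x%:R / (2 ^ clg x)%:R)%R.

(* Main.v *)
Require Import Defs.
From mathcomp Require Import all_boot all_order all_algebra zify ring lra.
Import Order.TTheory GRing.Theory Num.Theory.

Lemma clg_pow k : clg (2 ^ k) = k.
Proof. by rewrite /clg up_expnK. Qed.

Lemma clg_eq k L : 2 ^ k < L <= 2 ^ k.+1 -> clg L = k.+1.
Proof. by move=> H; rewrite /clg (up_log_eq (isT : 1 < 2) H). Qed.

Lemma d_facts {m} : 0 < m ->
  let d := rhbs_d m in let L := m.+1 in
  [/\ 0 < d, d <= m &
  (clg d).+1 * d + (clg (L - d)).+1 * (L - d) + L + 2 ^ (clg L) =
  (clg L).+1 * L + 2 ^ (clg d) + 2 ^ (clg (L - d))].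
Proof.
case: m => // m _ d L; subst d L.
have /andP[lo hi] := up_log_bounds (isT : 1 < 2) (isT : 1 < m.+2).
case Ek: (up_log 2 m.+2) lo hi => [|[|k]] lo hi.
- by rewrite expn0 in hi.
- have m0 : m = 0 by move: hi; rewrite expn1; lia.
  by subst m; vm_compute.
have Ec : clg m.+2 = k.+2 by [].
rewrite /= in lo.
set h := 2 ^ k.
have e1 : 2 ^ k.+1 = 2 * h by rewrite expnS.
have e2 : 2 ^ k.+2 = 4 * h by rewrite !expnS mulnA.
have h0 : 0 < h by rewrite expn_gt0.
rewrite e1 in lo; rewrite e2 in hi.
rewrite /rhbs_d Ec.
have -> : k.+2 - 2 = k by lia.
have -> : k.+2 - 1 = k.+1 by lia.
rewrite -/h e1.
case: ifP => Hc.
- have c1 : clg h = k by rewrite clg_pow.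
  have c2 : clg (m.+2 - h) = k.+1 by apply: clg_eq; rewrite e1 /h; apply/andP; split; rewrite -/h; lia.
  rewrite c1 c2 e1; split; lia.
- have c1 : clg (m.+1 - 2 * h + 1) = k.+1 by apply: clg_eq; rewrite e1; apply/andP; split; lia.
  have -> : m.+2 - (m.+1 - 2 * h + 1) = 2 * h by lia.
  have c2 : clg (2 * h) = k.+1 by rewrite -e1 clg_pow.
  rewrite c1 c2 e1; split; lia.
Qed.
Arguments rhbs_d : simpl never.

Lemma sumS a b F : \sum_(a <= i < b) (F i).+1 = \sum_(a <= i < b) F i + (b - a).
Proof.
by rewrite -[b - a]muln1 -sum_nat_const_nat -big_split; apply: eq_bigr => i _; rewrite /= addn1.
Qed.

Lemma cost_sum f m : m <= f ->
  \sum_(0 <= j < m.+1) rhbs_cost f m j + 2 ^ (clg m.+1) = (clg m.+1).+1 * m.+1.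
Proof.
elim: f m => [|f IH] m Hm.
  have -> : m = 0 by lia.
  by rewrite big_nat1 /clg up_log1.
case: m Hm => [|m] Hm.
  by rewrite big_nat1 /clg up_log1.
have [d0 dm Heq] := d_facts (ltn0Sn m : 0 < m.+1).
set d := rhbs_d m.+1 in d0 dm Heq *.
rewrite (eq_big_nat _ _ (F2 := fun j => if j < d then (rhbs_cost f (d-1) j).+1
                                   else (rhbs_cost f (m.+1-d) (j-d)).+1)); last first.
  by move=> j _.
rewrite (big_cat_nat _ (n := d)) //=; last by lia.
rewrite (eq_big_nat _ _ (F2 := fun j => (rhbs_cost f (d-1) j).+1)); last first.
  by move=> j /andP[_ ->].
have H := big_addn 0 m.+2 d xpredT (fun j => if j < d then (rhbs_cost f (d-1) j).+1
                                   else (rhbs_cost f (m.+1-d) (j-d)).+1).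
rewrite add0n in H; rewrite {}H.
rewrite [\sum_(0 <= i < m.+2 - d) _](eq_big_nat _ _ (F2 := fun j => (rhbs_cost f (m.+1-d) j).+1)); last first.
  move=> j _ /=; have -> : (j + d < d) = false by lia.
  by rewrite addnK.
rewrite !sumS.
have IH1 := IH (d - 1) ltac:(lia).
have IH2 := IH (m.+1 - d) ltac:(lia).
have e1 : (d - 1).+1 = d by lia.
have e2 : (m.+1 - d).+1 = m.+2 - d by lia.
rewrite e1 in IH1; rewrite e2 in IH2.
lia.
Qed.

Definition S (m : nat) := \sum_(j < m.+1) rhbs_comps m j.

Lemma S_eq m : S m + 2 ^ (clg m.+1) = (clg m.+1).+1 * m.+1.
Proof. by rewrite /S /rhbs_comps -(big_mkord xpredT) cost_sum. Qed.

Lemma inner_sum i a : a.+1 < i ->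
  \sum_(b < i | a < b) rhbs_comps (i - 2 - a) (b - 1 - a) = S (i - 2 - a).
Proof.
move=> ai.
rewrite big_mkcond /= -(big_mkord xpredT (fun b => if a < b then rhbs_comps (i - 2 - a) (b - 1 - a) else 0)).
rewrite (big_cat_nat _ (n := a.+1)) //=; last by lia.
rewrite (eq_big_nat _ _ (F2 := fun _ => 0)); last first.
  by move=> j /andP[_ H]; rewrite ltnNge -ltnS H.
rewrite sum_nat_const_nat muln0 add0n.
have H := big_addn 0 i a.+1 xpredT (fun b => if a < b then rhbs_comps (i - 2 - a) (b - 1 - a) else 0).
rewrite add0n in H; rewrite {}H.
rewrite (eq_big_nat _ _ (F2 := fun j => rhbs_comps (i - 2 - a) j)); last first.
  move=> j _ /=; have -> : (a < j + a.+1) = true by lia.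
  by have -> : j + a.+1 - 1 - a = j by lia.
have -> : i - a.+1 = (i - 2 - a).+1 by lia.
by rewrite /S big_mkord.
Qed.

Definition T (n : nat) := \sum_(0 <= m < n) S m.

Lemma numer_eq n :
  \sum_(a < n.+1) \sum_(b < n.+1 | a < b) rhbs_comps (n.+1 - 2 - a) (b - 1 - a) = T n.
Proof.
rewrite big_ord_recr /=.
rewrite [X in _ + X]big_pred0; last by move=> b /=; rewrite ltnNge -ltnS ltn_ord.
rewrite addn0 /T big_rev_mkord subn0.
apply: eq_bigr => a _.
rewrite inner_sum; last by have := ltn_ord a; lia.
congr S; lia.
Qed.

Lemma clg_step n : 0 < n ->
  (n < 2 ^ clg n /\ clg n.+1 = clg n) \/ (n = 2 ^ clg n /\ clg n.+1 = (clg n).+1).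
Proof.
move=> n0.
have up : n <= 2 ^ clg n by apply: up_logP.
case: (ltngtP n (2 ^ clg n)) => H; last first.
- by right; split => //; apply: clg_eq; have := expn_gt0 2 (clg n); rewrite expnS; lia.
- by move: up; rewrite leqNgt H.
left; split => //.
case: n n0 up H => [//|[|n]] _ up H.
  by move: H; rewrite /clg up_log1.
have /andP[lo hi] := up_log_bounds (isT : 1 < 2) (isT : 1 < n.+2).
rewrite -/(clg n.+2) in lo hi H *.
case E: (clg n.+2) lo hi H => [|k] lo hi H.
  by move: hi; rewrite expn0.
apply: clg_eq; rewrite /=; apply/andP; split; simpl in lo; lia.
Qed.

Lemma T_closed n : 0 < n ->
  6 * T n + 6 * n * 2 ^ clg n + 3 * 2 ^ clg n =
  3 * (clg n).+1 * n * n.+1 + 2 ^ clg n * 2 ^ clg n + 2.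
Proof.
elim: n => [//|n IH] _.
case: n IH => [|n] IH.
  by have := S_eq 0; rewrite /T big_nat1 /clg up_log1; lia.
have IH' := IH (ltn0Sn n).
rewrite /T big_nat_recr //= -/(T n.+1).
have HS := S_eq n.+1.
case: (@clg_step n.+1 (ltn0Sn n)) => [[lt E]|[E1 E]]; rewrite E in HS *.
- clear IH lt E; move: IH' HS; generalize (T n.+1) (S n.+1) (2 ^ clg n.+1) (clg n.+1) => t s P k.
  lia.
- clear IH E; rewrite expnS -E1 in HS *; rewrite -E1 in IH'.
  move: IH' HS; generalize (T n.+1) (S n.+1) (clg n.+1) => t s k.
  lia.
Qed.
Local Open Scope ring_scope.

Lemma bin2_mul n : ('C(n.+1, 2) * 2 = n.+1 * n)%N.
Proof. elim: n => [//|n IH]; rewrite binS bin1 mulnDl IH; lia. Qed.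

Theorem lemma2 (R : realFieldType) :
  exists (K : R) (N : nat), forall i : nat, ~~ odd i -> (N <= i)%N ->
    `| step4_avg R i -
       ((clg (i - 1))%:R + 1 - 2 / pfrac R i + 1 / (3 * pfrac R i ^+ 2)) |
      <= K / i%:R.
Proof.
exists 10, 4%N => i ev i4.
case: i ev i4 => [//|n] ev i4.
have n3 : (3 <= n)%N by lia.
have n0 : (0 < n)%N by lia.
have n1 : (1 < n)%N by lia.
have nodd : odd n by move: ev; rewrite /= negbK.
rewrite subn1 /=.
rewrite /step4_avg.
under eq_bigr do rewrite -natr_sum.
rewrite -natr_sum numer_eq.
have HT := @T_closed n n0.
have HC := bin2_mul n.
have [[ltP Ek]|[eqP Ek]] := @clg_step n n0; last first.
  exfalso; move: nodd; rewrite eqP oddX /=.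
  by case E: (clg n) => //; move: eqP; rewrite E; lia.
have gtP : (2 ^ clg n < 2 * n)%N.
  have := up_log_gtn (isT : (1 < 2)%N) n1.
  rewrite -/(clg n).
  case E: (clg n) => [|k] /=; first by lia.
  by rewrite expnS; lia.
rewrite /pfrac Ek.
move: HT HC ltP gtP.
generalize (T n) ('C(n.+1, 2)) (clg n) (2 ^ clg n)%N => t c k P HT HC ltP gtP.
rewrite -[k.+1]addn1 -[n.+1]addn1 in HT; rewrite -[n.+1]addn1 in HC *.
have HTr : (6 * t + 6 * n * P + 3 * P)%:R = (3 * (k + 1) * n * (n + 1) + P * P + 2)%:R :> R by rewrite HT.
have HCr : (c * 2)%:R = ((n + 1) * n)%:R :> R by rewrite HC.
rewrite !(natrD, natrM) in HTr HCr.
rewrite !natrD.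
have ltPr : (n%:R + 1 <= P%:R :> R) by rewrite natr1 ler_nat.
have gtPr : (P%:R <= 2 * n%:R :> R) by rewrite -natrM ler_nat; lia.
have n3r : (3 <= n%:R :> R) by rewrite (ler_nat R 3 n).
set tr := (t%:R : R) in HTr *.
set cr := (c%:R : R) in HCr *.
set kr := (k%:R : R) in HTr *.
set Pr := (P%:R : R) in HTr ltPr gtPr *.
set nr := (n%:R : R) in HTr HCr ltPr gtPr n3r *.
clearbody tr cr kr Pr nr; clear HT HC ltP gtP Ek nodd n0 n1 n3 ev i4.
have nr0 : nr != 0 by apply/eqP => E; lra.
have i0 : nr + 1 != 0 by apply/eqP => E; lra.
have P0 : Pr != 0 by apply/eqP => E; lra.
have c0 : cr != 0 by apply/eqP => E; rewrite E in HCr; nra.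
have -> : tr / cr - (kr + 1 - 2 / ((nr + 1) / Pr) + 1 / (3 * ((nr + 1) / Pr) ^+ 2))
   = (Pr ^+ 2 + (2 - 3 * Pr) * (nr + 1)) / (3 * nr * (nr + 1) ^+ 2).
  have -> : tr = (6 * tr) / 6 by field.
  have -> : 6 * tr = (3 * (kr + 1) * nr * (nr + 1) + Pr * Pr + 2 - 6 * nr * Pr - 3 * Pr) by lra.
  have -> : cr = (cr * 2) / 2 by field.
  rewrite HCr.
  by field; rewrite ?nr0 ?i0 ?P0 //; repeat (apply/andP; split) => //; apply/eqP; lra.
have B0 : 0 < 3 * nr * (nr + 1) ^+ 2 by apply: mulr_gt0; [lra | apply: exprn_gt0; lra].
have HA : `|Pr ^+ 2 + (2 - 3 * Pr) * (nr + 1)| <= 30 * nr * (nr + 1).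
  rewrite ler_norml; apply/andP; split; nra.
rewrite normf_div (gtr0_norm B0).
apply: le_trans (_ : 30 * nr * (nr + 1) / (3 * nr * (nr + 1) ^+ 2) <= _).
  by apply: ler_wpM2r => //; rewrite invr_ge0 ltW.
rewrite le_eqVlt; apply/orP; left; apply/eqP.
by field; rewrite ?nr0 ?i0.
Qed.
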